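(* Let $K=3$ and let $l\ge m>0$ be integers. Then \[ h(l,\,m,\,0)\ \le\ h(l-1,\,m-1,\,1)+1. \]
   Context: For a vector $\vec n=(n_1,n_2,n_3)$ of nonnegative integers, the following random process is run: stocks start at $\vec n^{(0)}=\vec n$; at each step $t=1,2,\dots$, as long as at least two coordinates of $\vec n^{(t-1)}$ are nonzero, an index $i$ is chosen uniformly at random (independently of the past) among the indices with $n_i^{(t-1)}>0$, and $\vec n^{(t)}=\vec n^{(t-1)}-\vec e_i$ ($\vec e_i$ the $i$-th standard unit vector). The process stops at the first time $T$ at which at most one coordinate is nonzero, and $h(\vec n)=\mathbb{E}[T]$. Equivalently, with $\operatorname{support}(\vec n)=\{i:n_i\ne 0\}$: $h(\vec n)=0$ if $|\operatorname{support}(\vec n)|\le1$, and otherwise $h(\vec n)=1+\frac{1}{|\operatorname{support}(\vec n)|}\sum_{i\in\operatorname{support}(\vec n)}h(\vec n-\vec e_i)$. *)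

(* Defs.v *)
From mathcomp Require Import all_boot all_order all_algebra.
Set Implicit Arguments. Unset Strict Implicit. Unset Printing Implicit Defensive.
Import Order.TTheory GRing.Theory Num.Theory.
Local Open Scope ring_scope.

Definition supp_size (n1 n2 n3 : nat) : nat :=
  ((n1 != 0%N) + (n2 != 0%N) + (n3 != 0%N))%N.

(* The fuel k is the total stock n1+n2+n3, which decreases by one per step. *)
Fixpoint h_fuel (k : nat) (n1 n2 n3 : nat) : rat :=
  match k with
  | 0%N => 0
  | k'.+1 =>
    let s := supp_size n1 n2 n3 in
    if (s <= 1)%N then 0
    else 1 + (s%:R)^-1 *
      ((if n1 != 0%N then h_fuel k' n1.-1 n2 n3 else 0)
     + (if n2 != 0%N then h_fuel k' n1 n2.-1 n3 else 0)
     + (if n3 != 0%N then h_fuel k' n1 n2 n3.-1 else 0))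
  end.

(* h(n1,n2,n3) = expected stopping time of the process (K = 3). *)
Definition h (n1 n2 n3 : nat) : rat := h_fuel (n1 + n2 + n3) n1 n2 n3.

(* Main.v *)
Require Import Defs.
From mathcomp Require Import all_boot all_order all_algebra.
From mathcomp Require Import ring lra.
Import Order.TTheory GRing.Theory Num.Theory.
Local Open Scope ring_scope.

Lemma hE a b c : h a b c =
  if (supp_size a b c <= 1)%N then 0
  else 1 + ((supp_size a b c)%:R)^-1 *
      ((if a != 0%N then h a.-1 b c else 0)
     + (if b != 0%N then h a b.-1 c else 0)
     + (if c != 0%N then h a b c.-1 else 0)).
Proof.
rewrite /h.
case E: (a + b + c)%N => [|k].
  move: E; case: a => [|a] //; case: b => [|b] //; case: c => [|c] //.
rewrite /=; case: ifP => // _.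
congr (_ + _ * (_ + _ + _)).
- by case: a E => [|a] //= E; rewrite -[k]/(k.+1.-1) -E.
- by case: b E => [|b] //= E; rewrite -[k]/(k.+1.-1) -E addnS.
- by case: c E => [|c] //= E; rewrite -[k]/(k.+1.-1) -E addnS.
Qed.

Lemma h_ge0 a b c : 0 <= h a b c.
Proof.
rewrite /h; move: (a + b + c)%N => k; elim: k a b c => [|k IH] a b c //=.
case: ifP => // _.
apply: addr_ge0 => //; apply: mulr_ge0; first by rewrite invr_ge0.
by apply: addr_ge0; [apply: addr_ge0|]; case: ifP.
Qed.

Lemma f0l b : h 0 b 0 = 0.
Proof. by rewrite hE /supp_size; case: b. Qed.
Lemma f0r a : h a 0 0 = 0.
Proof. by rewrite hE /supp_size; case: a. Qed.

Lemma fS a b : h a.+1 b.+1 0 = 1 + (h a b.+1 0 + h a.+1 b 0) / 2.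
Proof. rewrite hE /supp_size /= addr0 mulrC //. Qed.

Lemma gS a b : h a.+1 b.+1 1 = 1 + (h a b.+1 1 + h a.+1 b 1 + h a.+1 b.+1 0) / 3.
Proof. rewrite hE /supp_size /= mulrC //. Qed.

Lemma g0 : h 0 0 1 = 0.
Proof. by rewrite hE. Qed.

Lemma gA a : h a.+1 0 1 = 1 + (h a 0 1 + h a.+1 0 0) / 2.
Proof. rewrite hE /supp_size /= addr0 mulrC //. Qed.

Lemma gB b : h 0 b.+1 1 = 1 + (h 0 b 1 + h 0 b.+1 0) / 2.
Proof. rewrite hE /supp_size /= add0r mulrC addrC //. Qed.

Lemma h_a01 a : h a 0 1 = h a 1 0.
Proof.
elim: a => [|a IH]; first by rewrite g0 f0l.
by rewrite gA fS IH !f0r.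
Qed.

Lemma h_0b1 b : h 0 b 1 = h 1 b 0.
Proof.
elim: b => [|b IH]; first by rewrite g0 f0r.
by rewrite gB fS IH !f0l addr0 add0r.
Qed.

Lemma fa1_le2 a : h a 1 0 <= 2.
Proof.
elim: a => [|a IH]; first by rewrite f0l.
rewrite fS f0r; lra.
Qed.

Lemma f1b_le2 b : h 1 b 0 <= 2.
Proof.
elim: b => [|b IH]; first by rewrite f0r.
rewrite fS f0l; lra.
Qed.

Lemma Elem a b : h a.+1 b 0 + h a b.+1 0 <= 2 + 2 * h a b 0.
Proof.
elim: a b => [|a IHa] b.
  rewrite !f0l; have := f1b_le2 b; lra.
elim: b => [|b IHb].
  rewrite !f0r; have := fa1_le2 a.+1; lra.
rewrite (fS a.+1 b) (fS a b.+1) (fS a b).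
have := IHa b.+1; have := IHb; rewrite (fS a b); lra.
Qed.

Lemma main i j : h i.+1 j.+1 0 <= h i j 1 + 1.
Proof.
elim: i j => [|k IHk] j.
  rewrite h_0b1; case: j => [|j]; first by rewrite fS !f0l f0r; lra.
  rewrite fS f0l; have := h_ge0 1 j.+1 0; lra.
elim: j => [|n IHn].
  rewrite h_a01 fS f0r; have := h_ge0 k.+1 1 0; lra.
rewrite gS (fS k.+1 n.+1).
have := IHk n.+1; have := IHn; have := Elem k.+1 n.+1; lra.
Qed.

Theorem lemma8 (l m : nat) (hlm : (m <= l)%N) (hm : (0 < m)%N) :
  h l m 0 <= h l.-1 m.-1 1 + 1.
Proof.
case: l hlm => [|l]; first by case: m hm.
case: m hm => [|m] // _ _; exact: main.
Qed.
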